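(* Let $m\in\mathbb{N}$ and let $\{\{a_1,\dots,a_m\},\{b_1,\dots,b_m\}\}$ be an $m+m$ sum-and-distance system (non-inclusive or inclusive). Then \[\sum_{j=1}^m(a_j^2+b_j^2)=\begin{cases}\frac{1}{3!}(2m)\big((2m)^4-1\big) & \text{in the non-inclusive case},\\[2pt] \frac{1}{4!}(2m+1)\big((2m+1)^4-1\big) & \text{in the inclusive case}.\end{cases}\]
   Context: For positive integers $a_1<\dots<a_m$, $b_1<\dots<b_m$, the pair $\{\{a_1,\dots,a_m\},\{b_1,\dots,b_m\}\}$ is an $m+m$ non-inclusive sum-and-distance system if $\{a_j+b_k,\ |a_j-b_k| : j,k\in\{1,\dots,m\}\}=\{1,3,5,\dots,4m^2-1\}$, and an $m+m$ inclusive sum-and-distance system if $\{a_j,\ b_k,\ a_j+b_k,\ |a_j-b_k| : j,k\in\{1,\dots,m\}\}=\{1,2,\dots,2m(m+1)\}$. *)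

(* Defs.v *)
From mathcomp Require Import all_boot.
Set Implicit Arguments. Unset Strict Implicit. Unset Printing Implicit Defensive.

Definition absdiff (x y : nat) : nat := maxn x y - minn x y.

Definition incr_pos (m : nat) (a : seq nat) : Prop :=
  size a = m /\ sorted ltn a /\ all (fun x => 0 < x) a.

Definition sd_values (a b : seq nat) : pred nat :=
  fun x => has (fun aj => has (fun bk => (x == aj + bk) || (x == absdiff aj bk)) b) a.

Definition nonincl_SDS (m : nat) (a b : seq nat) : Prop :=
  incr_pos m a /\ incr_pos m b /\
  forall x, sd_values a b x = (odd x && (x < 4 * m ^ 2)).

Definition incl_SDS (m : nat) (a b : seq nat) : Prop :=
  incr_pos m a /\ incr_pos m b /\
  forall x, ((x \in a) || (x \in b) || sd_values a b x) = (0 < x <= 2 * m * (m + 1)).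

Definition sumsq (a b : seq nat) : nat := \sum_(x <- a) x ^ 2 + \sum_(x <- b) x ^ 2.

(* Main.v *)
Require Import Defs.
From mathcomp Require Import all_boot zify ring.

Definition vals (a b : seq nat) : seq nat :=
  [seq x + y | x <- a, y <- b] ++ [seq absdiff x y | x <- a, y <- b].

Lemma mem_vals a b x : (x \in vals a b) = sd_values a b x.
Proof.
rewrite /sd_values mem_cat; apply/idP/idP.
- case/orP=> /allpairsP [[i j] /= [Hi Hj ->]]; apply/hasP; exists i => //;
  apply/hasP; exists j => //; by rewrite eqxx ?orbT.
- case/hasP=> i Hi /hasP [j Hj] /orP [] /eqP ->; apply/orP;
  [left|right]; apply/allpairsP; by exists (i, j).
Qed.

Lemma sq_id x y : (x + y) ^ 2 + absdiff x y ^ 2 = 2 * x ^ 2 + 2 * y ^ 2.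
Proof.
case: (leqP x y) => H.
- have [d ->] : exists d, y = x + d by exists (y - x); lia.
  have -> : absdiff x (x + d) = d by rewrite /absdiff; lia. nia.
- have [d ->] : exists d, x = y + d by exists (x - y); lia.
  have -> : absdiff (y + d) y = d by rewrite /absdiff; lia. nia.
Qed.

Lemma sum_const_seq (r : seq nat) c : \sum_(x <- r) c = size r * c.
Proof. by rewrite big_const_seq count_predT iter_addn_0 mulnC. Qed.

Lemma sum_vals a b : \sum_(x <- vals a b) x ^ 2 =
  2 * size b * \sum_(x <- a) x ^ 2 + 2 * size a * \sum_(x <- b) x ^ 2.
Proof.
rewrite big_cat !big_allpairs_dep /= -big_split /=.
rewrite (eq_bigr (fun i => 2 * size b * i ^ 2 + 2 * \sum_(j <- b) j ^ 2)).
  rewrite big_split /= sum_const_seq -!big_distrr /=. lia.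
move=> i _. rewrite -big_split /=.
rewrite (eq_bigr (fun j => 2 * i ^ 2 + 2 * j ^ 2)); last by move=> j _; apply: sq_id.
rewrite big_split /= sum_const_seq -big_distrr /=; lia.
Qed.

Lemma perm_of (s t : seq nat) : uniq t -> s =i t -> size s <= size t -> perm_eq s t.
Proof.
move=> Ut Est Hs. apply: uniq_perm => //.
apply: (leq_size_uniq Ut) => // x; by rewrite Est.
Qed.

Definition odds n := [seq 2 * i + 1 | i <- iota 0 n].

Lemma mem_odds n x : (x \in odds n) = odd x && (x < 2 * n).
Proof.
apply/mapP/idP.
- case=> i; rewrite mem_iota => Hi ->. rewrite oddD oddM /=. lia.
- case/andP=> Ho Hx. exists x./2.
  + rewrite mem_iota. have := odd_double_half x. rewrite Ho. lia.
  + have := odd_double_half x. rewrite Ho. lia.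
Qed.

Lemma uniq_odds n : uniq (odds n).
Proof. rewrite map_inj_uniq ?iota_uniq // => i j. lia. Qed.

Lemma sum_odds n : 3 * \sum_(x <- odds n) x ^ 2 + n = 4 * n ^ 3.
Proof.
rewrite big_map. elim: n => [|n IH]; first by rewrite big_nil.
rewrite -[n.+1]addn1 iotaD big_cat big_seq1 /=. rewrite mulnDr. nia.
Qed.

Lemma sum_iota1 N : 6 * \sum_(x <- iota 1 N) x ^ 2 = N * (N + 1) * (2 * N + 1).
Proof.
elim: N => [|N IH]; first by rewrite big_nil.
rewrite -[N.+1]addn1 iotaD big_cat big_seq1 /= mulnDr IH. nia.
Qed.

Theorem theorem6 (m : nat) (a b : seq nat) :
  (nonincl_SDS m a b ->
     sumsq a b = (2 * m) * ((2 * m) ^ 4 - 1) %/ 3`!) /\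
  (incl_SDS m a b ->
     sumsq a b = (2 * m + 1) * ((2 * m + 1) ^ 4 - 1) %/ 4`!).
Proof.
split.
- case=> [[Sa _] [[Sb _] H]].
  have P : perm_eq (vals a b) (odds (2 * m ^ 2)).
    apply: perm_of; first exact: uniq_odds.
    + move=> x; by rewrite mem_vals H mem_odds mulnA.
    + by rewrite size_cat !size_allpairs size_map size_iota Sa Sb; lia.
  have E := sum_odds (2 * m ^ 2).
  rewrite -(perm_big _ P) sum_vals Sa Sb in E.
  rewrite /sumsq. set A := \sum_(x <- a) x ^ 2 in E *. set B := \sum_(x <- b) x ^ 2 in E *.
  move: Sa Sb {H P} => Sa Sb.
  have [m0|mpos] := posnP m.
    by rewrite /A /B (size0nil (etrans Sa m0)) (size0nil (etrans Sb m0)) !big_nil m0.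
  have -> : 3`! = 6 by [].
  have F : (2 * m) ^ 4 = 16 * m ^ 4 by ring.
  rewrite F.
  have E1 : m * (3 * (A + B) + m) = m * (16 * m ^ 5).
    have G1 : 2 * (m * (3 * (A + B) + m)) = 3 * (2 * m * A + 2 * m * B) + 2 * m ^ 2 by ring.
    have G2 : 2 * (m * (16 * m ^ 5)) = 4 * (2 * m ^ 2) ^ 3 by ring.
    lia.
  move/eqP: E1; rewrite eqn_pmul2l // => /eqP E1.
  have -> : 2 * m * (16 * m ^ 4 - 1) = 6 * (A + B).
    rewrite mulnBr muln1.
    have G : 2 * m * (16 * m ^ 4) = 2 * (16 * m ^ 5) by ring.
    lia.
  by rewrite mulKn.
- case=> [[Sa _] [[Sb _] H]].
  have P : perm_eq (a ++ b ++ vals a b) (iota 1 (2 * m * (m + 1))).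
    apply: perm_of; first exact: iota_uniq.
    + move=> x; rewrite mem_cat (mem_cat x b) mem_vals orbA H mem_iota; lia.
    + by rewrite !size_cat !size_allpairs size_iota Sa Sb; lia.
  have E := sum_iota1 (2 * m * (m + 1)).
  rewrite -(perm_big _ P) big_cat /= big_cat /= sum_vals Sa Sb in E.
  rewrite /sumsq. set A := \sum_(x <- a) x ^ 2 in E *. set B := \sum_(x <- b) x ^ 2 in E *.
  have -> : 4`! = 24 by [].
  set N := 2 * m * (m + 1) in E *.
  have F : (2 * m + 1) ^ 4 = 4 * (N * (N + 1)) + 1 by rewrite /N; ring.
  rewrite F addnK.
  have E1 : (2 * m + 1) * (6 * (A + B)) = (2 * m + 1) * (N * (N + 1) * (2 * m + 1)).
    have G1 : (2 * m + 1) * (6 * (A + B)) = 6 * (A + (B + (2 * m * A + 2 * m * B))) by ring.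
    have G2 : (2 * m + 1) * (N * (N + 1) * (2 * m + 1)) = N * (N + 1) * (2 * N + 1) by rewrite /N; ring.
    by rewrite G1 G2.
  move/eqP: E1; rewrite eqn_pmul2l; last by lia.
  move=> /eqP E1.
  have -> : (2 * m + 1) * (4 * (N * (N + 1))) = 24 * (A + B) by rewrite -[24]/(4 * 6) -mulnA E1; ring.
  by rewrite mulKn.
Qed.
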